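(* For all integers $n\geq0$, $$s_1(n)+\sum_{j\geq1}(-1)^j\left(s_1(n-j(3j-2))+s_1(n-j(3j+2))\right)=s_2(n)+\sum_{j\geq1}(-1)^j\left(s_2(n-j(3j-1))+s_2(n-j(3j+1))\right)$$ and this common value equals $1$ if $n=6\,\frac{j(3j-1)}{2}$ for some even $j\in\mathbb{Z}$, equals $-1$ if $n=6\,\frac{j(3j-1)}{2}$ for some odd $j\in\mathbb{Z}$, and equals $0$ otherwise. (Explicitly, the sums are $s_1(n)-s_1(n-1)-s_1(n-5)+s_1(n-8)+s_1(n-16)-\cdots$ and $s_2(n)-s_2(n-2)-s_2(n-4)+s_2(n-10)+s_2(n-14)-\cdots$.)
   Context: $s_1(n)$ (resp. $s_2(n)$) is the number of partitions of $n$ all of whose parts are congruent to $\pm1$ (resp. $\pm2$) modulo $6$, with value $1$ at $n=0$ and $0$ at negative arguments. The numbers $j(3j-1)/2$, $j\in\mathbb{Z}$, are the generalized pentagonal numbers, distinct for distinct $j$. *)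

(* Defs.v *)
From mathcomp Require Import all_boot all_order all_algebra.
Set Implicit Arguments. Unset Strict Implicit. Unset Printing Implicit Defensive.
Import Order.TTheory GRing.Theory Num.Theory.

(* A partition of n is encoded by its multiplicity function m : part k has
   multiplicity m k (k ranges over 0..n, and part 0 is forbidden).  Multiplicities
   are bounded by n, which loses nothing since k * m k <= n for k >= 1. *)
Definition is_partition_with (P : nat -> bool) (n : nat)
  (m : {ffun 'I_n.+1 -> 'I_n.+1}) : bool :=
  [&& (nat_of_ord (m ord0) == 0)%N,
      (\sum_(k < n.+1) k * m k == n)%N &
      [forall k : 'I_n.+1, (0 < m k)%N ==> P k]].

Definition npart (P : nat -> bool) (n : nat) : nat :=
  #|[set m : {ffun 'I_n.+1 -> 'I_n.+1} | @is_partition_with P n m]|.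

Definition P1 (k : nat) : bool := (k %% 6 == 1)%N || (k %% 6 == 5)%N.
Definition P2 (k : nat) : bool := (k %% 6 == 2)%N || (k %% 6 == 4)%N.

(* extended to integer arguments: 0 at negative arguments; s(0) = 1 *)
Definition s1 (z : int) : int :=
  match z with Posz n => (npart P1 n)%:Z | Negz _ => 0 end.
Definition s2 (z : int) : int :=
  match z with Posz n => (npart P2 n)%:Z | Negz _ => 0 end.

(* Main.v *)
Require Import Defs.
From mathcomp Require Import all_boot all_order all_algebra.
From mathcomp Require Import zify ring lra.
Set Implicit Arguments. Unset Strict Implicit. Unset Printing Implicit Defensive.
Import Order.TTheory GRing.Theory Num.Theory.
Local Open Scope ring_scope.

Definition eqm (N : nat) (p q : {poly int}) := forall i, (i < N)%N -> p`_i = q`_i.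

Lemma eqm_refl N p : eqm N p p. Proof. by []. Qed.
Lemma eqm_sym N p q : eqm N p q -> eqm N q p.
Proof. by move=> h i hi; rewrite h. Qed.
Lemma eqm_trans N p q r : eqm N p q -> eqm N q r -> eqm N p r.
Proof. by move=> h1 h2 i hi; rewrite h1 // h2. Qed.
Lemma eqm_le N N' p q : (N' <= N)%N -> eqm N p q -> eqm N' p q.
Proof. by move=> hN h i hi; apply: h; apply: leq_trans hN. Qed.
Lemma eqmD N p q p' q' : eqm N p q -> eqm N p' q' -> eqm N (p + p') (q + q').
Proof. by move=> h h' i hi; rewrite !coefD h // h'. Qed.
Lemma eqmN N p q : eqm N p q -> eqm N (- p) (- q).
Proof. by move=> h i hi; rewrite !coefN h. Qed.
Lemma eqmM N p q p' q' : eqm N p q -> eqm N p' q' -> eqm N (p * p') (q * q').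
Proof.
move=> h h' i hi; rewrite !coefM; apply: eq_bigr => j _.
rewrite h; last by apply: leq_ltn_trans hi; rewrite -ltnS.
by rewrite h' //; apply: leq_ltn_trans hi; apply: leq_subr.
Qed.
Lemma eqmXn N e p q : eqm N p q -> eqm (N + e) ('X^e * p) ('X^e * q).
Proof.
move=> h i hi; rewrite !coefXnM; case: ifP => // /negbT; rewrite -leqNgt => hei.
by apply: h; rewrite ltn_subLR // addnC.
Qed.
Lemma eqm_sum N (I : Type) (r : seq I) (F G : I -> {poly int}) :
  (forall i, eqm N (F i) (G i)) -> eqm N (\sum_(i <- r) F i) (\sum_(i <- r) G i).
Proof.
move=> h i hi; rewrite !coef_sum; apply: eq_bigr => j _; exact: h.
Qed.
Lemma eqm_prod N (I : Type) (r : seq I) (F G : I -> {poly int}) :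
  (forall i, eqm N (F i) (G i)) -> eqm N (\prod_(i <- r) F i) (\prod_(i <- r) G i).
Proof.
move=> h; elim: r => [|a r IH]; first by rewrite !big_nil.
by rewrite !big_cons; apply: eqmM.
Qed.
Lemma eqm_prod1 N (I : Type) (r : seq I) (F : I -> {poly int}) :
  (forall i, eqm N (F i) 1) -> eqm N (\prod_(i <- r) F i) 1.
Proof.
move=> h; apply: eqm_trans (eqm_prod r h) _; rewrite big1_eq; exact: eqm_refl.
Qed.

Lemma eqm_cancel N (E p q : {poly int}) : E`_0 = 1 -> eqm N (E * p) (E * q) -> eqm N p q.
Proof.
move=> E0 h.
have h2 : forall i, (i < N)%N -> (E * (p - q))`_i = 0.
  by move=> i hi; rewrite mulrBr coefB h // subrr.
suff: forall i, (i < N)%N -> forall k, (k <= i)%N -> (p - q)`_k = 0.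
  move=> H i hi; apply/eqP; rewrite -subr_eq0 -coefB; apply/eqP; exact: (H i hi i).
elim=> [|i IH] hi k hk.
  move: (h2 0%N hi); rewrite coefM big_ord_recl big_ord0 addr0 E0 mul1r.
  by move: hk; rewrite leqn0 => /eqP ->.
move: hk; rewrite leq_eqVlt => /orP [/eqP -> | hk]; last first.
  by apply: IH => //; apply: ltnW.
move: (h2 _ hi); rewrite coefM big_ord_recl E0 mul1r subn0.
rewrite big1 ?addr0 // => j _.
rewrite IH ?mulr0 //; first by apply: ltnW.
by rewrite /bump /= subSS leq_subr.
Qed.

Lemma coef0_prod (I : Type) (r : seq I) (F : I -> {poly int}) :
  (forall i, (F i)`_0 = 1) -> (\prod_(i <- r) F i)`_0 = 1.
Proof.
move=> h; elim: r => [|a r IH]; first by rewrite big_nil coefC.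
by rewrite big_cons coef0M h IH mulr1.
Qed.

Lemma eqm_1X N k : (N <= k)%N -> eqm N (1 - 'X^k) 1.
Proof.
move=> hk i hi; rewrite coefB coefXn.
have -> : (i == k) = false by apply/negbTE; rewrite neq_ltn (leq_trans hi hk).
by rewrite subr0.
Qed.

Lemma eqm_prod_trunc N K0 K (F : nat -> {poly int}) :
  (K0 <= K)%N -> (forall i, (K0 <= i)%N -> eqm N (F i) 1) ->
  eqm N (\prod_(i < K) F i) (\prod_(i < K0) F i).
Proof.
move=> hK h; elim: K hK => [|K IH] hK.
  by move: hK; rewrite leqn0 => /eqP ->; exact: eqm_refl.
move: hK; rewrite leq_eqVlt => /orP [/eqP -> | hK]; first exact: eqm_refl.
rewrite big_ord_recr /= -[\prod_(i < K0) F i]mulr1; apply: eqmM; first exact: IH.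
exact: h.
Qed.

Fixpoint qbin (Q : {poly int}) (n k : nat) {struct n} : {poly int} :=
  match n, k with
  | _, 0 => 1
  | 0, _.+1 => 0
  | n'.+1, k'.+1 => qbin Q n' k' + Q ^+ k'.+1 * qbin Q n' k'.+1
  end.

Definition qp (Q : {poly int}) m := \prod_(i < m) (1 - Q ^+ i.+1).

Lemma qbin0 Q n : qbin Q n 0 = 1. Proof. by case: n. Qed.
Lemma qbinS Q n k : qbin Q n.+1 k.+1 = qbin Q n k + Q ^+ k.+1 * qbin Q n k.+1.
Proof. by []. Qed.
Lemma qbin_gt Q n k : (n < k)%N -> qbin Q n k = 0.
Proof.
elim: n k => [|n IH] [|k] //= h.
by rewrite !IH ?mulr0 ?addr0 // ltnW.
Qed.
Lemma qpS Q m : qp Q m.+1 = qp Q m * (1 - Q ^+ m.+1).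
Proof. by rewrite /qp big_ord_recr. Qed.
Lemma qp0 Q : qp Q 0 = 1. Proof. by rewrite /qp big_ord0. Qed.

Lemma qbin_fact Q n k : (k <= n)%N -> qp Q k * qp Q (n - k) * qbin Q n k = qp Q n.
Proof.
elim: n k => [|n IH] [|k] //= hk.
- by rewrite qp0 !mul1r.
- by rewrite qp0 subn0 mul1r mulr1.
rewrite subSS mulrDr qpS.
have e1 : qp Q k * (1 - Q ^+ k.+1) * qp Q (n - k) * qbin Q n k
          = (1 - Q ^+ k.+1) * qp Q n.
  by rewrite -(IH k hk) ; ring.
move: hk; rewrite ltnS leq_eqVlt => /orP [/eqP ek | hk].
  rewrite ek in e1 *; rewrite (@qbin_gt Q n n.+1 (ltnSn n)) !mulr0 addr0 e1 qpS; ring.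
have hnk : (n - k = (n - k.+1).+1)%N by rewrite subnSK.
have e2 : qp Q k * (1 - Q ^+ k.+1) * qp Q (n - k) * (Q ^+ k.+1 * qbin Q n k.+1)
          = Q ^+ k.+1 * (1 - Q ^+ (n - k)) * qp Q n.
  rewrite -(IH k.+1 hk) hnk qpS qpS; ring.
rewrite e1 e2 qpS.
have -> : Q ^+ n.+1 = Q ^+ k.+1 * Q ^+ (n - k) by rewrite -exprD addSn subnKC // ltnW.
ring.
Qed.

Lemma qbin_diag Q n : qbin Q n n = 1.
Proof. by elim: n => [|n IH] //=; rewrite IH qbin_gt ?mulr0 ?addr0. Qed.

Lemma qbinB Q n k : (forall m, qp Q m != 0) -> (k <= n)%N ->
  qbin Q n.+1 k.+1 = Q ^+ (n - k) * qbin Q n k + qbin Q n k.+1.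
Proof.
move=> hQ hk; move: hk; rewrite leq_eqVlt => /orP [/eqP ek | hk].
  by rewrite ek subnn expr0 mul1r !qbin_diag (@qbin_gt Q n n.+1 (ltnSn n)) addr0.
apply: (mulfI (hQ k.+1)); apply: (mulfI (hQ (n - k)%N)).
have h1 := @qbin_fact Q n.+1 k.+1 (ltnW hk).
have h2 := @qbin_fact Q n k (ltnW hk).
have h3 := @qbin_fact Q n k.+1 hk.
rewrite subSS in h1.
have hnk : (n - k = (n - k.+1).+1)%N by rewrite subnSK.
have eA : qp Q (n - k) * (qp Q k.+1 * qbin Q n.+1 k.+1) = qp Q n.+1 by rewrite -h1; ring.
rewrite eA mulrDr mulrDr.
have eB : qp Q (n - k) * (qp Q k.+1 * (Q ^+ (n - k) * qbin Q n k))
   = Q ^+ (n - k) * (1 - Q ^+ k.+1) * qp Q n.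
  by rewrite -h2 qpS; ring.
have eC : qp Q (n - k) * (qp Q k.+1 * qbin Q n k.+1) = (1 - Q ^+ (n - k)) * qp Q n.
  by rewrite hnk qpS -h3; ring.
rewrite eB eC qpS.
have -> : Q ^+ n.+1 = Q ^+ (n - k) * Q ^+ k.+1 by rewrite -exprD addnS subnK // ltnW.
ring.
Qed.

Definition wt (Q u v : {poly int}) (n k : nat) :=
  if (n <= k)%N then Q ^+ 'C(k - n, 2) * u ^+ (k - n)
  else Q ^+ 'C(n - k, 2) * v ^+ (n - k).

Lemma wtS Q u v n k : wt Q u v n.+1 k.+1 = wt Q u v n k.
Proof. by rewrite /wt ltnS !subSS. Qed.

Lemma binS2 d : 'C(d.+1, 2) = ('C(d, 2) + d)%N.
Proof. by rewrite binS bin1. Qed.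

Lemma wt_v Q u v n k : (k <= n)%N ->
  wt Q u v n k * (v * Q ^+ n) = Q ^+ k * wt Q u v n.+1 k.
Proof.
move=> hk; rewrite /wt.
move: hk; rewrite leq_eqVlt => /orP [/eqP -> | hk].
  rewrite leqnn ltnn subnn subSn // subnn /= expr0 !mulr1 mul1r.
  by rewrite bin_small // expr0 expr1 mul1r mulrC.
have h1 : (n <= k)%N = false by rewrite leqNgt hk.
have h2 : (n < k)%N = false by rewrite ltnNge ltnW.
rewrite h1 h2.
rewrite (subSn (ltnW hk)) binS2.
have -> : n = (k + (n - k))%N by rewrite subnKC // ltnW.
rewrite addKn exprD exprS exprD; ring.
Qed.

Lemma wt_u Q u v m n k : u * v = Q -> (k <= m + n)%N ->
  wt Q u v n k * (u * Q ^+ m) = Q ^+ (m + n - k) * wt Q u v n k.+1.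
Proof.
move=> huv hk.
case: (leqP n k) => hnk.
  rewrite /wt hnk (leq_trans hnk (leqnSn _)) subSn // binS2.
  have e : Q ^+ m = Q ^+ (m + n - k) * Q ^+ (k - n).
    by rewrite -exprD; congr (_ ^+ _); lia.
  rewrite e exprD exprS; ring.
have [d hd] : exists d, (n - k = d.+1)%N by exists (n - k).-1; lia.
have hd' : (n - k.+1 = d)%N by lia.
have -> : wt Q u v n k.+1 = Q ^+ 'C(d, 2) * v ^+ d.
  rewrite /wt hd'; case: ifP => // h.
  have -> : d = 0%N by lia.
  have -> : (k.+1 - n = 0)%N by lia.
  by [].
have h1 : (n <= k)%N = false by rewrite leqNgt hnk.
rewrite /wt h1 hd binS2.
have -> : (m + n - k = m + d + 1)%N by lia.
rewrite !exprD exprS expr1 -huv; ring.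
Qed.

Lemma fjtp0 Q u v n :
  \prod_(i < n) (1 + v * Q ^+ i) = \sum_(k < n.+1) qbin Q n k * wt Q u v n k.
Proof.
elim: n => [|n IH].
  by rewrite big_ord0 big_ord1 qbin0 /wt leqnn subnn expr0 !mul1r.
rewrite big_ord_recr IH.
rewrite [RHS]big_ord_recl qbin0 mul1r.
under [in RHS]eq_bigr => k _ do rewrite qbinS wtS mulrDl.
rewrite big_split /= addrCA mulrDr mulr1; congr (_ + _).
have e3 : \sum_(k < n.+2) Q ^+ k * qbin Q n k * wt Q u v n.+1 k
   = wt Q u v n.+1 0 + \sum_(i < n.+1) Q ^+ i.+1 * qbin Q n i.+1 * wt Q u v n i.
  rewrite big_ord_recl expr0 qbin0 !mul1r; congr (_ + _).
rewrite -e3 [RHS]big_ord_recr /= (@qbin_gt Q n n.+1 (ltnSn n)) mulr0 mul0r addr0 mulr_suml.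
apply: eq_bigr => k _.
have hk : (k <= n)%N := ltn_ord k.
by rewrite -mulrA wt_v //; ring.
Qed.

Lemma fjtp Q u v m n : u * v = Q -> (forall j, qp Q j != 0) ->
  \prod_(i < m) (1 + u * Q ^+ i) * \prod_(i < n) (1 + v * Q ^+ i)
  = \sum_(k < (m + n).+1) qbin Q (m + n) k * wt Q u v n k.
Proof.
move=> huv hQ; elim: m => [|m IH].
  by rewrite big_ord0 mul1r add0n; apply: fjtp0.
rewrite big_ord_recr mulrAC IH addSn.
set N := (m + n)%N.
have eR : \sum_(k < N.+2) qbin Q N.+1 k * wt Q u v n k
   = wt Q u v n 0 + \sum_(k < N.+1) Q ^+ (N - k) * qbin Q N k * wt Q u v n k.+1
     + \sum_(k < N.+1) qbin Q N k.+1 * wt Q u v n k.+1.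
  rewrite big_ord_recl qbin0 mul1r -addrA -big_split; congr (_ + _).
  by apply: eq_bigr => k _; rewrite lift0 (@qbinB Q N k hQ (ltn_ord k)) mulrDl.
have eA : \sum_(k < N.+1) qbin Q N k * wt Q u v n k
   = wt Q u v n 0 + \sum_(k < N.+1) qbin Q N k.+1 * wt Q u v n k.+1.
  rewrite big_ord_recl qbin0 mul1r; congr (_ + _).
  rewrite [RHS]big_ord_recr /= (@qbin_gt Q N N.+1 (ltnSn N)) mul0r addr0.
  by [].
have eB : (\sum_(k < N.+1) qbin Q N k * wt Q u v n k) * (u * Q ^+ m)
   = \sum_(k < N.+1) Q ^+ (N - k) * qbin Q N k * wt Q u v n k.+1.
  rewrite mulr_suml; apply: eq_bigr => k _.
  have hk : (k <= m + n)%N := ltn_ord k.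
  by rewrite -mulrA wt_u //; ring.
rewrite mulrDr mulr1 eR eB {1}eA; ring.
Qed.

Lemma coef0_qp c m : (0 < c)%N -> (qp ('X^c) m)`_0 = 1.
Proof.
move=> hc; rewrite /qp; apply: coef0_prod => i.
rewrite coefB -exprM coefXn coefC /=.
have -> : (0%N == (c * i.+1)%N) = false by apply/negbTE; rewrite eq_sym muln_eq0 negb_or -!lt0n hc.
by rewrite subr0.
Qed.

Lemma qp_neq0 c m : (0 < c)%N -> qp ('X^c) m != 0.
Proof.
move=> hc; apply/negP => /eqP h.
by move: (coef0_qp m hc); rewrite h coef0.
Qed.

Lemma qp_trunc c T j : (0 < c)%N -> (T <= j)%N -> eqm T.+1 (qp ('X^c) j) (qp ('X^c) T).
Proof.
move=> hc hj; rewrite /qp; apply: (eqm_prod_trunc (F := fun i => 1 - ('X^c) ^+ i.+1)) => // i hi.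
rewrite -exprM; apply: eqm_1X.
by apply: leq_trans (leq_pmull _ hc); rewrite ltnS.
Qed.

Lemma qbin_lim c M k : (0 < c)%N -> (k <= M + M)%N ->
  eqm (minn k (M + M - k)).+1 (qp ('X^c) M * qbin ('X^c) (M + M) k) 1.
Proof.
move=> hc hk; set T := minn k (M + M - k); set Q := 'X^c.
have hT1 : (T <= k)%N by apply: geq_minl.
have hT2 : (T <= M + M - k)%N by apply: geq_minr.
have hTM : (T <= M)%N by rewrite /T; lia.
have hT4 : (T <= M + M)%N by lia.
have h0 := qbin_fact Q hk.
have c1 : eqm T.+1 (qp Q T * (qp Q T * qbin Q (M + M) k)) (qp Q T * 1).
  rewrite mulr1; apply: eqm_trans (qp_trunc hc hT4).
  rewrite -h0 mulrA; apply: eqmM; last exact: eqm_refl.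
  by apply: eqmM; apply: eqm_sym; apply: qp_trunc.
have c2 := eqm_cancel (coef0_qp T hc) c1.
apply: eqm_trans c2; apply: eqmM; last exact: eqm_refl.
exact: qp_trunc.
Qed.

Definition dd M k := if (M <= k)%N then (k - M)%N else (M - k)%N.
Definition ee a b M k :=
  ((a + b) * 'C(dd M k, 2) + (if (M <= k)%N then a else b) * dd M k)%N.

Lemma wt_mon a b M k :
  wt ('X^(a + b)) (- 'X^a) (- 'X^b) M k = (-1) ^+ (dd M k) * 'X^(ee a b M k).
Proof.
rewrite /wt /ee /dd; case: ifP => _;
  [rewrite (exprNn ('X^a)) | rewrite (exprNn ('X^b))]; rewrite -!exprM exprD; ring.
Qed.

Lemma dd_le M k : (k <= M + M)%N -> (dd M k + minn k (M + M - k) = M)%N.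
Proof. by rewrite /dd; case: ifP => h; lia. Qed.

Lemma dd_ee a b M k : (0 < a)%N -> (0 < b)%N -> (dd M k <= ee a b M k)%N.
Proof.
move=> ha hb; rewrite /ee; apply: leq_trans (leq_addl _ _).
by case: ifP => _; apply: leq_pmull.
Qed.

Lemma jtp_lim a b M : (0 < a)%N -> (0 < b)%N ->
  eqm M.+1
    (qp ('X^(a + b)) M * (\prod_(i < M) (1 + (- 'X^a) * 'X^(a + b) ^+ i)
        * \prod_(i < M) (1 + (- 'X^b) * 'X^(a + b) ^+ i)))
    (\sum_(k < (M + M).+1) wt ('X^(a + b)) (- 'X^a) (- 'X^b) M k).
Proof.
move=> ha hb.
have hc : (0 < a + b)%N by rewrite addn_gt0 ha.
rewrite fjtp; last first.
- by move=> j; apply: qp_neq0.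
- by rewrite mulrNN -exprD.
rewrite mulr_sumr; apply: eqm_sum => k.
have hk : (k <= M + M)%N := ltn_ord k.
rewrite wt_mon.
have h1 := qbin_lim hc hk.
have h2 : eqm (minn k (M + M - k)).+1
   ((-1) ^+ dd M k * (qp ('X^(a + b)) M * qbin ('X^(a + b)) (M + M) k))
   ((-1) ^+ dd M k * 1).
  by apply: eqmM => //; apply: eqm_refl.
have h3 := eqmXn (e := ee a b M k) h2.
have h4 : (M.+1 <= (minn k (M + M - k)).+1 + ee a b M k)%N.
  have := dd_le hk; have := @dd_ee a b M k ha hb; lia.
have h5 := eqm_le h4 h3.
set s := (-1) ^+ dd M k; set X := 'X^(ee a b M k).
set P := qp _ M; set B := qbin _ _ k.
have -> : P * (B * (s * X)) = X * (s * (P * B)) by ring.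
have -> : s * X = X * (s * 1) by ring.
exact: h5.
Qed.

Definition eA a b d := ((a + b) * 'C(d, 2) + a * d)%N.
Definition eB a b d := ((a + b) * 'C(d, 2) + b * d)%N.
Definition Theta a b M : {poly int} :=
  1 + \sum_(d < M) (-1) ^+ d.+1 * ('X^(eA a b d.+1) + 'X^(eB a b d.+1)).

Lemma sum_wt a b M :
  \sum_(k < (M + M).+1) wt ('X^(a + b)) (- 'X^a) (- 'X^b) M k = Theta a b M.
Proof.
under eq_bigr => k _ do rewrite wt_mon.
rewrite -(big_mkord xpredT (fun k => (-1) ^+ dd M k * 'X^(ee a b M k))).
rewrite (@big_cat_nat _ _ _ M) //=; last by lia.
have eS : forall G : nat -> {poly int},
    \sum_(M <= i < (M + M).+1) G i = \sum_(0 <= i < M.+1) G (i + M)%N.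
  move=> G; rewrite -{1}[M]add0n big_addn.
  by have -> : ((M + M).+1 - M = M.+1)%N by lia.
rewrite eS.
rewrite big_nat_recl //.
have -> : dd M (0 + M) = 0%N by rewrite /dd add0n leqnn subnn.
have -> : ee a b M (0 + M) = 0%N by rewrite /ee /dd add0n leqnn subnn !muln0.
rewrite expr0 mul1r /Theta addrCA; congr (_ + _).
rewrite big_nat_rev /= add0n -big_split big_mkord.
apply: eq_bigr => i _; have hi := ltn_ord i.
have h1 : dd M (M - i.+1) = i.+1 by rewrite /dd; case: ifP; lia.
have h2 : dd M (i.+1 + M) = i.+1 by rewrite /dd; case: ifP; lia.
have h3 : ee a b M (M - i.+1) = eB a b i.+1.
  rewrite /ee h1 /eB; case: ifP => // h; lia.
have h4 : ee a b M (i.+1 + M) = eA a b i.+1.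
  rewrite /ee h2 /eA; case: ifP => // h; lia.
by rewrite h1 h2 h3 h4 mulrDr addrC.
Qed.

Definition Fp (P : nat -> bool) (k m : nat) : {poly int} :=
  if P k then 'X^(k * m) else (m == 0)%N%:R.
Definition Sp P N := \prod_(k < N.+1) \sum_(m < N.+1) Fp P k m.
Definition Ebar (P : nat -> bool) N : {poly int} :=
  \prod_(k < N.+1) (if P k then 1 - 'X^k else 1).

Lemma prodF P n (f : {ffun 'I_n.+1 -> 'I_n.+1}) :
  \prod_(k < n.+1) Fp P k (f k) =
  if [forall k : 'I_n.+1, (0 < f k)%N ==> P k]
  then 'X^(\sum_(k < n.+1) k * f k)%N else 0.
Proof.
case: ifP => h.
  rewrite (big_morph (fun e => 'X^e) (id1 := 1) (op1 := *%R) (@exprD _ 'X) (expr0 'X)).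
  apply: eq_bigr => k _; rewrite /Fp; case: ifP => // hP.
  move/forallP: h => /(_ k); rewrite hP implybF -eqn0Ngt => /eqP ->.
  by rewrite muln0 expr0.
move/negbT: h; rewrite negb_forall => /existsP [k]; rewrite negb_imply => /andP [hk hP].
rewrite (bigD1 k) //= /Fp (negbTE hP).
by rewrite eqn0Ngt hk mul0r.
Qed.

Lemma npart_coef P n : P 0%N = false -> (Sp P n)`_n = (npart P n)%:Z.
Proof.
move=> P0; rewrite /Sp bigA_distr_bigA /= coef_sum.
under eq_bigr => f _ do rewrite prodF.
have e : forall f : {ffun 'I_n.+1 -> 'I_n.+1},
    (if [forall k : 'I_n.+1, (0 < f k)%N ==> P k]
     then 'X^(\sum_(k < n.+1) k * f k)%N else 0 : {poly int})`_n
    = ((is_partition_with P f)%:R : int).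
  move=> f; rewrite /is_partition_with; case: ifP => h.
    rewrite coefXn andbT eq_sym.
    have -> : (nat_of_ord (f ord0) == 0)%N.
      apply/negP => /negP; rewrite -lt0n => hf.
      by move/forallP: h => /(_ ord0); rewrite hf P0.
    by [].
  move/negbT: h => h; rewrite coef0; case: and3P => // [[_ _ h2]].
  by case/negP: h.
under eq_bigr => f _ do rewrite e.
have e2 : forall f : {ffun 'I_n.+1 -> 'I_n.+1},
   ((is_partition_with P f)%:R : int) = if is_partition_with P f then 1 else 0.
  by move=> f; case: (is_partition_with P f).
under eq_bigr => f _ do rewrite e2.
by rewrite -big_mkcond sumr_const /npart cardsE natz.
Qed.

Lemma geom (x : {poly int}) n : (\sum_(m < n) x ^+ m) * (1 - x) = 1 - x ^+ n.
Proof.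
elim: n => [|n IH]; first by rewrite big_ord0 mul0r expr0 subrr.
by rewrite big_ord_recr mulrDl IH exprS; ring.
Qed.

Lemma SE P N : P 0%N = false -> eqm N.+1 (Sp P N * Ebar P N) 1.
Proof.
move=> P0; rewrite /Sp /Ebar -big_split /=; apply: eqm_prod1 => k.
rewrite /Fp; case: ifP => hP.
  under eq_bigr => m _ do rewrite exprM.
  rewrite geom -exprM; apply: eqm_1X.
  have hk : (0 < k)%N by rewrite lt0n; apply/negP => /eqP h; rewrite h P0 in hP.
  by rewrite mulnC leq_pmulr.
by rewrite mulr1 big_ord_recl big1 ?addr0.
Qed.

Lemma coef0_Ebar P N : P 0%N = false -> (Ebar P N)`_0 = 1.
Proof.
move=> P0; apply: coef0_prod => k; case: ifP => hP; last by rewrite coefC.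
have hk : (0 < k)%N by rewrite lt0n; apply/negP => /eqP h; rewrite h P0 in hP.
rewrite coefB coefXn coefC /=.
by have -> : (0%N == k) = false by apply/negbTE; rewrite eq_sym -lt0n.
Qed.

Lemma Ebar_trunc P n N : (n <= N)%N -> eqm n.+1 (Ebar P N) (Ebar P n).
Proof.
move=> hn; rewrite /Ebar.
apply: (eqm_prod_trunc (F := fun k => if P k then 1 - 'X^k else 1)) => // i hi.
by case: ifP => _; [apply: eqm_1X | apply: eqm_refl].
Qed.

Lemma Sp_trunc P n N : P 0%N = false -> (n <= N)%N -> eqm n.+1 (Sp P N) (Sp P n).
Proof.
move=> P0 hn; apply: (eqm_cancel (coef0_Ebar n P0)).
have a1 : eqm n.+1 (Ebar P n * Sp P N) 1.
  apply: (@eqm_trans _ _ (Ebar P N * Sp P N)).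
    by apply: eqmM; [apply: eqm_sym; exact: Ebar_trunc | exact: eqm_refl].
  have h := @SE P N P0; rewrite mulrC; exact: (eqm_le _ h).
have a2 : eqm n.+1 (Ebar P n * Sp P n) 1 by rewrite mulrC; apply: SE.
exact: eqm_trans a1 (eqm_sym a2).
Qed.

Lemma Sp_coef P m N : P 0%N = false -> (m <= N)%N -> (Sp P N)`_m = (npart P m)%:Z.
Proof.
move=> P0 hm; rewrite (Sp_trunc P0 hm) //; exact: npart_coef.
Qed.

Lemma prod_one c a (G : nat -> {poly int}) :
  \prod_(0 <= r < c) (if r == a then G r else 1) = if (a < c)%N then G a else 1.
Proof.
elim: c => [|c IH]; first by rewrite big_geq.
rewrite big_nat_recr //= IH.
case: (ltngtP a c) => h.
- by rewrite (ltn_trans h (ltnSn _)) mulr1.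
- by rewrite ltnS leqNgt h mulr1.
- by rewrite h ltnSn mul1r.
Qed.

Lemma prod_two c a b (G : nat -> {poly int}) : (a < c)%N -> (b < c)%N -> a != b ->
  \prod_(0 <= r < c) (if (r == a) || (r == b) then G r else 1) = G a * G b.
Proof.
move=> ha hb hab.
have -> : \prod_(0 <= r < c) (if (r == a) || (r == b) then G r else 1)
   = \prod_(0 <= r < c) ((if r == a then G r else 1) * (if r == b then G r else 1)).
  apply: eq_bigr => r _; case: (eqVneq r a) => [->|_]; last by rewrite mul1r.
  by rewrite (negbTE hab) mulr1.
by rewrite big_split /= !prod_one ha hb.
Qed.

Lemma group c a b (P : nat -> bool) M :
  (forall M r, (r < c)%N -> P (c * M + r)%N = (r == a) || (r == b)) ->
  (a < c)%N -> (b < c)%N -> a != b ->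
  \prod_(i < M) (1 + (- 'X^a) * 'X^c ^+ i) * \prod_(i < M) (1 + (- 'X^b) * 'X^c ^+ i)
  = \prod_(0 <= k < c * M) (if P k then 1 - 'X^k else 1 : {poly int}).
Proof.
move=> hP ha hb hab; elim: M => [|M IH].
  by rewrite !big_ord0 muln0 big_geq // mulr1.
rewrite !big_ord_recr /= mulnSr (@big_cat_nat _ _ _ (c * M)) //=; last by lia.
rewrite -IH.
have -> : \prod_(c * M <= k < c * M + c) (if P k then 1 - 'X^k else 1 : {poly int})
   = \prod_(0 <= r < c) (if (r == a) || (r == b) then 1 - 'X^(r + c * M) else 1).
  rewrite -{1}[(c * M)%N]add0n big_addn addKn.
  apply: eq_big_nat => r /andP [_ hr].
  by rewrite addnC hP.
rewrite prod_two // -!exprM !exprD; ring.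
Qed.

Lemma P1_per M r : (r < 6)%N -> P1 (6 * M + r)%N = (r == 1%N) || (r == 5%N).
Proof. by move=> hr; rewrite /P1 mulnC modnMDl modn_small. Qed.
Lemma P2_per M r : (r < 6)%N -> P2 (6 * M + r)%N = (r == 2%N) || (r == 4%N).
Proof. by move=> hr; rewrite /P2 mulnC modnMDl modn_small. Qed.

Lemma group3 M :
  qp ('X^18) M * (\prod_(i < M) (1 + (- 'X^6) * 'X^18 ^+ i)
     * \prod_(i < M) (1 + (- 'X^12) * 'X^18 ^+ i)) = qp ('X^6) (3 * M).
Proof.
elim: M => [|M IH]; first by rewrite !big_ord0 muln0 !qp0 !mulr1.
rewrite qpS !big_ord_recr /=.
have -> : (3 * M.+1 = (3 * M).+3)%N by lia.
rewrite !qpS -IH -!exprM !mulNr -!exprD.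
have -> : (18 * M.+1 = 6 * (3 * M).+3)%N by lia.
have -> : (6 + 18 * M = 6 * (3 * M).+1)%N by lia.
have -> : (12 + 18 * M = 6 * (3 * M).+2)%N by lia.
ring.
Qed.

Lemma Theta_trunc a b n : (0 < a)%N -> (0 < b)%N -> eqm n.+1 (Theta a b n.+1) (Theta a b n).
Proof.
move=> ha hb; rewrite /Theta big_ord_recr /= addrA.
rewrite -[X in eqm _ _ X]addr0; apply: eqmD; first exact: eqm_refl.
move=> i hi; rewrite coef0 mulrDr coefD !coefMXn.
have h1 : (i < eA a b n.+1)%N.
  by apply: (leq_trans hi); rewrite /eA; apply: leq_trans (leq_addl _ _); apply: leq_pmull.
have h2 : (i < eB a b n.+1)%N.
  by apply: (leq_trans hi); rewrite /eB; apply: leq_trans (leq_addl _ _); apply: leq_pmull.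
by rewrite h1 h2 addr0.
Qed.

Lemma sideL (P : nat -> bool) a b n :
  P 0%N = false ->
  (forall M r, (r < a + b)%N -> P ((a + b) * M + r)%N = (r == a) || (r == b)) ->
  (0 < a)%N -> (0 < b)%N -> a != b ->
  eqm n.+1 (Theta a b n * Sp P n) (qp ('X^(a + b)) n.+1).
Proof.
move=> P0 hP ha hb hab.
have hc : (0 < a + b)%N by rewrite addn_gt0 ha.
have hac : (a < a + b)%N by rewrite -{1}[a]addn0 ltn_add2l.
have hbc : (b < a + b)%N by rewrite -{1}[b]add0n ltn_add2r.
have J := @jtp_lim a b n.+1 ha hb.
rewrite sum_wt (@group (a + b)%N a b P n.+1 hP hac hbc hab) big_mkord in J.
set Eb := \prod_(k < (a + b) * n.+1) _ in J.
have hE : eqm n.+1 Eb (Ebar P n).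
  rewrite /Eb /Ebar.
  apply: (eqm_prod_trunc (F := fun k => if P k then 1 - 'X^k else 1)).
    by rewrite leq_pmull.
  by move=> i hi; case: ifP => _; [apply: eqm_1X | apply: eqm_refl].
have J2 : eqm n.+1 (Theta a b n) (qp ('X^(a + b)) n.+1 * Ebar P n).
  apply: (@eqm_trans _ _ (Theta a b n.+1)).
    by apply: eqm_sym; apply: Theta_trunc.
  apply: (@eqm_trans _ _ (qp ('X^(a + b)) n.+1 * Eb)).
    by apply: eqm_sym; apply: (eqm_le (leqnSn _) J).
  by apply: eqmM; [apply: eqm_refl | exact: hE].
apply: (@eqm_trans _ _ (qp ('X^(a + b)) n.+1 * Ebar P n * Sp P n)).
  by apply: eqmM; [exact: J2 | exact: eqm_refl].
rewrite -mulrA -[X in eqm _ _ X]mulr1; apply: eqmM; first exact: eqm_refl.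
by rewrite mulrC; apply: SE.
Qed.

Lemma side3 n : (Theta 6 12 n)`_n = (qp ('X^6) n.+1)`_n.
Proof.
have J := @jtp_lim 6 12 n.+1 isT isT.
rewrite sum_wt in J.
have e : qp ('X^(6 + 12)) n.+1 * (\prod_(i < n.+1) (1 + - 'X^6 * 'X^(6 + 12) ^+ i)
   * \prod_(i < n.+1) (1 + - 'X^12 * 'X^(6 + 12) ^+ i)) = qp ('X^6) (3 * n.+1).
  exact: group3.
rewrite e in J.
rewrite -(@Theta_trunc 6 12 n isT isT n (ltnSn n)) -(J n (leqW (leqnn n.+1))).
have h1 := @qp_trunc 6 n (3 * n.+1) isT ltac:(lia).
have h2 := @qp_trunc 6 n n.+1 isT (leqnSn _).
by rewrite (h1 n (ltnSn n)) (h2 n (ltnSn n)).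
Qed.

Definition sgen (P : nat -> bool) (z : int) : int :=
  match z with Posz m => (npart P m)%:Z | Negz _ => 0 end.

Lemma coef_sign k (p : {poly int}) i : ((-1) ^+ k * p)`_i = (-1) ^+ k * p`_i.
Proof.
elim: k => [|k IH]; first by rewrite !expr0 !mul1r.
by rewrite !exprS -!mulrA !mulN1r coefN IH.
Qed.

Lemma coef_ThetaS a b n S : (Theta a b n * S)`_n = S`_n +
  \sum_(d < n) (-1) ^+ d.+1 * (('X^(eA a b d.+1) * S)`_n + ('X^(eB a b d.+1) * S)`_n).
Proof.
rewrite /Theta mulrDl mul1r coefD mulr_suml coef_sum; congr (_ + _).
by apply: eq_bigr => d _; rewrite -mulrA coef_sign mulrDl coefD.
Qed.

Lemma coefX_S P n e : P 0%N = false -> ('X^e * Sp P n)`_n = sgen P (n%:Z - e%:Z).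
Proof.
move=> P0; rewrite coefXnM; case: ltnP => h.
  have [k hk] : exists k, (e - n = k.+1)%N by exists (e - n).-1; lia.
  have -> : n%:Z - e%:Z = Negz k.
    by rewrite NegzE -hk -subzn ?opprB // ltnW.
  by [].
by rewrite subzn // /= Sp_coef // leq_subr.
Qed.

Lemma binZ j : ('C(j, 2))%:Z * 2 = j%:Z * (j%:Z - 1).
Proof.
elim: j => [|j IH]; first by [].
by rewrite binS2 PoszD mulrDl IH intS; ring.
Qed.


Lemma P1_0 : P1 0%N = false. Proof. by []. Qed.
Lemma P2_0 : P2 0%N = false. Proof. by []. Qed.

Lemma eA15 j : (eA 1 5 j)%:Z = j%:Z * (3 * j%:Z - 2).
Proof.
rewrite /eA PoszD !PoszM.
have h := binZ j.
have -> : (1 + 5)%N%:Z * ('C(j, 2))%:Z = 3 * (('C(j, 2))%:Z * 2) by rewrite /=; ring.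
by rewrite h; ring.
Qed.
Lemma eB15 j : (eB 1 5 j)%:Z = j%:Z * (3 * j%:Z + 2).
Proof.
rewrite /eB PoszD !PoszM.
have h := binZ j.
have -> : (1 + 5)%N%:Z * ('C(j, 2))%:Z = 3 * (('C(j, 2))%:Z * 2) by rewrite /=; ring.
by rewrite h; ring.
Qed.
Lemma eA24 j : (eA 2 4 j)%:Z = j%:Z * (3 * j%:Z - 1).
Proof.
rewrite /eA PoszD !PoszM.
have h := binZ j.
have -> : (2 + 4)%N%:Z * ('C(j, 2))%:Z = 3 * (('C(j, 2))%:Z * 2) by rewrite /=; ring.
by rewrite h; ring.
Qed.
Lemma eB24 j : (eB 2 4 j)%:Z = j%:Z * (3 * j%:Z + 1).
Proof.
rewrite /eB PoszD !PoszM.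
have h := binZ j.
have -> : (2 + 4)%N%:Z * ('C(j, 2))%:Z = 3 * (('C(j, 2))%:Z * 2) by rewrite /=; ring.
by rewrite h; ring.
Qed.
Lemma eA612 j : (eA 6 12 j)%:Z = 3 * j%:Z * (3 * j%:Z - 1).
Proof.
rewrite /eA PoszD !PoszM.
have h := binZ j.
have -> : (6 + 12)%N%:Z * ('C(j, 2))%:Z = 9 * (('C(j, 2))%:Z * 2) by rewrite /=; ring.
by rewrite h; ring.
Qed.
Lemma eB612 j : (eB 6 12 j)%:Z = 3 * (- j%:Z) * (3 * (- j%:Z) - 1).
Proof.
rewrite /eB PoszD !PoszM.
have h := binZ j.
have -> : (6 + 12)%N%:Z * ('C(j, 2))%:Z = 9 * (('C(j, 2))%:Z * 2) by rewrite /=; ring.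
by rewrite h; ring.
Qed.

Lemma side_sum P a b n (e1 e2 : nat -> int) : P 0%N = false ->
  (forall j, (eA a b j)%:Z = e1 j) -> (forall j, (eB a b j)%:Z = e2 j) ->
  sgen P n%:Z + \sum_(1 <= j < n.+1) (-1) ^+ j * (sgen P (n%:Z - e1 j) + sgen P (n%:Z - e2 j))
  = (Theta a b n * Sp P n)`_n.
Proof.
move=> P0 h1 h2; rewrite coef_ThetaS big_add1 big_mkord /= Sp_coef //; congr (_ + _).
by apply: eq_bigr => d _; rewrite !coefX_S // h1 h2.
Qed.

Lemma Lval n :
  s1 n%:Z + \sum_(1 <= j < n.+1)
             (-1) ^+ j * (s1 (n%:Z - j%:Z * (3 * j%:Z - 2))
                        + s1 (n%:Z - j%:Z * (3 * j%:Z + 2)))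
  = (qp ('X^6) n.+1)`_n.
Proof.
have := @side_sum P1 1 5 n (fun j => j%:Z * (3 * j%:Z - 2)) (fun j => j%:Z * (3 * j%:Z + 2))
   P1_0 eA15 eB15.
move=> ->.
have hP : forall M r, (r < 1 + 5)%N -> P1 ((1 + 5) * M + r)%N = (r == 1%N) || (r == 5%N).
  exact: P1_per.
exact: (@sideL P1 1 5 n P1_0 hP isT isT isT n (ltnSn n)).
Qed.

Lemma Rval n :
  s2 n%:Z + \sum_(1 <= j < n.+1)
             (-1) ^+ j * (s2 (n%:Z - j%:Z * (3 * j%:Z - 1))
                        + s2 (n%:Z - j%:Z * (3 * j%:Z + 1)))
  = (qp ('X^6) n.+1)`_n.
Proof.
have := @side_sum P2 2 4 n (fun j => j%:Z * (3 * j%:Z - 1)) (fun j => j%:Z * (3 * j%:Z + 1))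
   P2_0 eA24 eB24.
move=> ->.
have hP : forall M r, (r < 2 + 4)%N -> P2 ((2 + 4) * M + r)%N = (r == 2%N) || (r == 4%N).
  exact: P2_per.
exact: (@sideL P2 2 4 n P2_0 hP isT isT isT n (ltnSn n)).
Qed.

Definition fz (j : int) : int := 3 * j * (3 * j - 1).

Lemma fz_inj x y : fz x = fz y -> x = y.
Proof.
move=> h.
have e1 : 3 * ((x - y) * (3 * (x + y) - 1)) = 0.
  have -> : 3 * ((x - y) * (3 * (x + y) - 1)) = fz x - fz y by rewrite /fz; ring.
  by rewrite h subrr.
move/eqP: e1; rewrite mulf_eq0 => /orP [/eqP h1 | ]; first by move: h1; lia.
rewrite mulf_eq0 => /orP [/eqP h1 | /eqP h1].
- by apply/eqP; rewrite -subr_eq0 h1.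
- by move: h1; lia.
Qed.

Lemma c3_gen n : (Theta 6 12 n)`_n = ((n%:Z == fz 0)%:R : int) +
  \sum_(d < n) (-1) ^+ d.+1 * ((n%:Z == fz d.+1%:Z)%:R + (n%:Z == fz (- d.+1%:Z))%:R).
Proof.
rewrite -[Theta 6 12 n]mulr1 coef_ThetaS coefC.
have -> : (n == 0%N) = (n%:Z == fz 0) by rewrite /fz mulr0 mul0r eqz_nat.
congr (_ + _); first by case: (_ == _).
apply: eq_bigr => d _.
by rewrite !mulr1 !coefXn -!eqz_nat eA612 eB612.
Qed.

Lemma fz_bound j : ((`|j|%N)%:Z <= fz j)%R.
Proof. by case: j => m; rewrite /fz ?NegzE /=; nia. Qed.

Lemma key_ind (j : int) d :
  (((j == d.+1%:Z)%:R + (j == - d.+1%:Z)%:R) : int) = ((`|j|%N == d.+1)%:R : int).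
Proof.
case: j => m.
  have -> : (Posz m == - d.+1%:Z) = false by apply/negbTE/eqP; lia.
  by rewrite addr0 eqz_nat.
have -> : (Negz m == d.+1%:Z) = false by apply/negbTE/eqP; rewrite NegzE; lia.
have -> : (Negz m == - d.+1%:Z) = (m.+1 == d.+1) by rewrite NegzE eqr_opp eqz_nat.
by rewrite add0r.
Qed.

Lemma c3_hit n j0 : n%:Z = fz j0 -> (Theta 6 12 n)`_n = (-1) ^+ `|j0|%N.
Proof.
move=> hn.
have hb : (`|j0|%N <= n)%N by rewrite -lez_nat hn fz_bound.
rewrite c3_gen hn.
have E : forall k, (fz j0 == fz k) = (j0 == k) by move=> k; apply/eqP/eqP => [/fz_inj|->].
rewrite E; under eq_bigr => d _ do rewrite !E key_ind.
case hj : `|j0|%N => [|m].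
  have -> : j0 = 0 by apply/eqP; rewrite -absz_eq0 hj.
  rewrite eqxx big1 ?addr0 // => d _.
  by rewrite mulr0.
have -> : (j0 == 0) = false by apply/negbTE; rewrite -absz_eq0 hj.
rewrite add0r.
have hm : (m < n)%N by rewrite -hj.
rewrite (bigD1 (Ordinal hm)) //= eqxx mulr1 big1 ?addr0 // => d hd.
have -> : (m.+1 == d.+1) = false.
  apply/negbTE; apply: contra hd => /eqP [h]; apply/eqP; apply: val_inj => /=.
  by rewrite h.
by rewrite mulr0.
Qed.

Lemma c3_miss n : (forall j, n%:Z <> fz j) -> (Theta 6 12 n)`_n = 0.
Proof.
move=> h; rewrite c3_gen.
have E : forall k, (n%:Z == fz k) = false by move=> k; apply/negbTE/eqP; apply: h.
rewrite E add0r big1 // => d _.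
by rewrite !E addr0 mulr0.
Qed.

Unset Implicit Arguments.

Theorem corollary2 (n : nat) :
  let L := s1 n%:Z + \sum_(1 <= j < n.+1)
             (-1) ^+ j * (s1 (n%:Z - j%:Z * (3 * j%:Z - 2))
                        + s1 (n%:Z - j%:Z * (3 * j%:Z + 2))) in
  let R := s2 n%:Z + \sum_(1 <= j < n.+1)
             (-1) ^+ j * (s2 (n%:Z - j%:Z * (3 * j%:Z - 1))
                        + s2 (n%:Z - j%:Z * (3 * j%:Z + 1))) in
  L = R /\
  ((exists j : int, (2 %| j)%Z /\ 2 * n%:Z = 6 * (j * (3 * j - 1))) -> L = 1) /\
  ((exists j : int, ~~ (2 %| j)%Z /\ 2 * n%:Z = 6 * (j * (3 * j - 1))) -> L = -1) /\
  ((forall j : int, 2 * n%:Z <> 6 * (j * (3 * j - 1))) -> L = 0).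
Proof.
move=> L R.
have hL : L = (Theta 6 12 n)`_n by rewrite /L Lval side3.
have hR : R = (Theta 6 12 n)`_n by rewrite /R Rval side3.
have conv : forall j : int, 2 * n%:Z = 6 * (j * (3 * j - 1)) -> n%:Z = fz j.
  move=> j; rewrite /fz.
  have -> : 3 * j * (3 * j - 1) = 3 * (j * (3 * j - 1)) by ring.
  generalize (j * (3 * j - 1)) => X; lia.
have conv2 : forall j : int, n%:Z = fz j -> 2 * n%:Z = 6 * (j * (3 * j - 1)).
  move=> j; rewrite /fz => ->; ring.
split; first by rewrite hL hR.
split.
  case=> j [hj he]; rewrite hL (c3_hit (conv j he)) -signr_odd.
  by move: hj; rewrite dvdzE /= dvdn2 => /negbTE ->.
split.
  case=> j [hj he]; rewrite hL (c3_hit (conv j he)) -signr_odd.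
  by move: hj; rewrite dvdzE /= dvdn2 negbK => ->.
move=> h; rewrite hL c3_miss // => j hj.
by apply: (h j); apply: conv2.
Qed.
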